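(* Let $H$ be a $\Lambda$-module, $k_1,k_2\ge1$ coprime integers, $z_1,z_2\in S^1$, and $\chi_i\colon H\to H/(t^{k_i}-1)\to S^1$ characters ($i=1,2$). Then $\alpha_{(k_1,z_1,\chi_1)}\otimes\alpha_{(k_2,z_2,\chi_2)}$ is conjugate to $\alpha_{(k_1k_2,\,z_1z_2,\,\chi_1\chi_2)}$, where $\chi_1\chi_2(h)=\chi_1(h)\chi_2(h)$ (a character factoring through $H/(t^{k_1k_2}-1)$). If moreover $\alpha_{(k_1,z_1,\chi_1)}$ and $\alpha_{(k_2,z_2,\chi_2)}$ are irreducible, then their tensor product is irreducible.
   Context: $\Lambda=\mathbb{Z}[t,t^{-1}]$; $\mathbb{Z}\ltimes H$ has multiplication $(n,h)(m,h')=(n+m,t^mh+h')$. For $k\ge1$, $z\in S^1$ and a character $\chi\colon H\to S^1$ factoring through $H/(t^k-1)H$, $\alpha_{(k,z,\chi)}\colon\mathbb{Z}\ltimes H\to U(k)$ is $\alpha_{(k,z,\chi)}(n,h)=z^nA_k^n\,\mathrm{diag}(\chi(h),\chi(th),\dots,\chi(t^{k-1}h))$, where $A_k$ is the $k\times k$ cyclic permutation matrix with $A_ke_i=e_{i+1}$ (indices mod $k$). *)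

(* Defs.v *)
From HB Require Import structures.
From mathcomp Require Import all_boot all_order all_algebra.
From mathcomp Require Import reals.
From mathcomp Require Import complex mxtens.
Set Implicit Arguments. Unset Strict Implicit. Unset Printing Implicit Defensive.
Import Order.TTheory GRing.Theory Num.Theory.
Local Open Scope ring_scope.

Section Defs.
Variable C : numClosedFieldType.

Definition in_S1 (z : C) : Prop := `|z| = 1.

Definition is_character (H : zmodType) (chi : H -> C) : Prop :=
  (forall h, in_S1 (chi h)) /\ (forall h h', chi (h + h') = chi h * chi h').

(* chi factors through H / (t^k - 1) H, i.e. chi vanishes (is 1) on (t^k - 1)H *)
Definition factors_through (H : zmodType) (t : H -> H) (k : nat) (chi : H -> C) :=
  forall h, chi (iter k t h - h) = 1.

(* A_k : cyclic permutation matrix, A_k e_j = e_{j+1 mod k}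
   (column j has its unique 1 in row j+1 mod k) *)
Definition cycmx (k : nat) : 'M[C]_k :=
  \matrix_(i < k, j < k) ((i : nat) == (j.+1 %% k)%N)%:R.

(* integer powers of A_k; A_k^{-1} = A_k^T since A_k is a permutation matrix *)
Definition cycpow (k : nat) (n : int) : 'M[C]_k :=
  match n with
  | Posz m => cycmx k ^+ m
  | Negz m => (cycmx k)^T ^+ m.+1
  end.

Definition alpha (H : zmodType) (t : H -> H) (k : nat) (z : C) (chi : H -> C)
  (g : int * H) : 'M[C]_k :=
  (z ^ g.1) *: (cycpow k g.1 *m diag_mx (\row_(i < k) chi (iter i t g.2))).

Definition tens_rep (G : Type) (m n : nat) (rho : G -> 'M[C]_m) (sigma : G -> 'M[C]_n)
  (g : G) : 'M[C]_(m * n) := rho g *t sigma g.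

Definition adjmx (n : nat) (U : 'M[C]_n) : 'M[C]_n := (map_mx Num.conj U)^T.

Definition unitary_mx (n : nat) (U : 'M[C]_n) : Prop := U *m adjmx U = 1%:M.

Definition conjugate_reps (G : Type) (n : nat) (rho sigma : G -> 'M[C]_n) : Prop :=
  exists U : 'M[C]_n, unitary_mx U /\ forall g, U *m rho g *m adjmx U = sigma g.

(* A subspace of column vectors is encoded by a
   matrix W whose rows span its transpose; invariance of the column space under
   rho g is invariance of the row space of W under right multiplication by (rho g)^T. *)
Definition irreducible_rep (G : Type) (n : nat) (rho : G -> 'M[C]_n) : Prop :=
  (0 < n)%N /\
  forall W : 'M[C]_n, (forall g, stablemx W (rho g)^T) -> (W == (0 : 'M[C]_n))%MS \/ row_full W.

End Defs.

(* Main.v *)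
Require Import Defs.
From HB Require Import structures.
From mathcomp Require Import all_boot all_order all_algebra.
From mathcomp Require Import reals.
From mathcomp Require Import complex mxtens.
From Stdlib Require Import Classical.
Import Order.TTheory GRing.Theory Num.Theory.
Local Open Scope ring_scope.
Set Implicit Arguments. Unset Strict Implicit. Unset Printing Implicit Defensive.



Section Chars.
Variable C : numClosedFieldType.
Variable H : zmodType.
Variable t : {additive H -> H}.

Lemma char_neq0 (chi : H -> C) h : is_character chi -> chi h != 0.
Proof. by case=> n _; rewrite -normr_eq0 n oner_eq0. Qed.

Lemma char0 (chi : H -> C) : is_character chi -> chi 0 = 1.
Proof.
move=> hc; have := char_neq0 0 hc; case: hc => _ m nz.
have e : chi 0 * chi 0 = chi 0 * 1 by rewrite mulr1 -m addr0.
exact: (mulfI nz e).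
Qed.

Lemma iter_t0 i : iter i t 0 = 0.
Proof. by elim: i => //= i ->; rewrite raddf0. Qed.

Lemma per_iter (chi : H -> C) k : is_character chi -> factors_through t k chi ->
  forall h, chi (iter k t h) = chi h.
Proof.
move=> [_ m] f h; have -> : iter k t h = (iter k t h - h) + h by rewrite subrK.
by rewrite m f mul1r.
Qed.

Lemma per_mul (chi : H -> C) d : (forall h, chi (iter d t h) = chi h) ->
  forall q h, chi (iter (q * d) t h) = chi h.
Proof. by move=> P; elim=> // q IH h; rewrite mulSn iterD P. Qed.

Lemma per_mod (chi : H -> C) d : (forall h, chi (iter d t h) = chi h) ->
  forall j h, chi (iter j t h) = chi (iter (j %% d) t h).
Proof. by move=> P j h; rewrite {1}(divn_eq j d) iterD per_mul. Qed.

End Chars.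


Section Cyc.
Variable C : numClosedFieldType.

Lemma cycmxE k (i j : 'I_k) : cycmx C k i j = (i == ordS j)%:R.
Proof. by rewrite mxE -val_eqE. Qed.

Lemma mulmx_cyc k m (X : 'M[C]_(m, k)) i j : (X *m cycmx C k) i j = X i (ordS j).
Proof.
rewrite mxE (bigD1 (ordS j)) //= cycmxE eqxx mulr1 big1 ?addr0 // => l /negbTE l0.
by rewrite cycmxE l0 mulr0.
Qed.

Lemma cyc_mulmx k m (X : 'M[C]_(k, m)) i j : (cycmx C k *m X) i j = X (ord_pred i) j.
Proof.
rewrite mxE (bigD1 (ord_pred i)) //= cycmxE ord_predK eqxx mul1r big1 ?addr0 // => l l0.
rewrite cycmxE; case: (eqVneq i (ordS l)) => [e|_]; last by rewrite mul0r.
by move: l0; rewrite e ordSK eqxx.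
Qed.

Lemma trcyc_mulmx k m (X : 'M[C]_(k, m)) i j : ((cycmx C k)^T *m X) i j = X (ordS i) j.
Proof.
rewrite mxE (bigD1 (ordS i)) //= mxE cycmxE eqxx mul1r big1 ?addr0 // => l l0.
by rewrite mxE cycmxE (negbTE l0) mul0r.
Qed.

Lemma mulmx_trcyc k m (X : 'M[C]_(m, k)) i j : (X *m (cycmx C k)^T) i j = X i (ord_pred j).
Proof.
rewrite mxE (bigD1 (ord_pred j)) //= mxE cycmxE ord_predK eqxx mulr1 big1 ?addr0 // => l l0.
rewrite mxE cycmxE; case: (eqVneq j (ordS l)) => [e|_]; last by rewrite mulr0.
by move: l0; rewrite e ordSK eqxx.
Qed.

Lemma iter_ordS k (j : 'I_k) m : val (iter m (@ordS k) j) = ((j + m) %% k)%N.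
Proof.
elim: m => [|m IH] /=; first by rewrite addn0 modn_small.
by rewrite IH addnS -addn1 modnDml addn1.
Qed.

Variable H : zmodType.
Variable t : {additive H -> H}.

Lemma alpha0 k z (chi : H -> C) h :
  alpha t k z chi (0%:Z, h) = diag_mx (\row_(i < k) chi (iter i t h)).
Proof. by rewrite /alpha /= expr0z scale1r expr0 mul1mx. Qed.

Lemma alpha1 k z (chi : H -> C) : is_character chi ->
  alpha t k z chi (1%:Z, 0) = z *: cycmx C k.
Proof.
move=> hc; rewrite /alpha /= expr1z expr1.
have -> : \row_(i < k) chi (iter i t 0) = const_mx 1.
  by apply/matrixP=> i j; rewrite !mxE iter_t0 char0.
by rewrite diag_const_mx mulmx1.
Qed.

End Cyc.


Section Irr.
Variable C : numClosedFieldType.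
Variable H : zmodType.
Variable t : {additive H -> H}.

Lemma irr_crit k z (psi : H -> C) : (0 < k)%N -> z != 0 -> is_character psi ->
  (forall p q : 'I_k, p != q -> exists h, psi (iter p t h) != psi (iter q t h)) ->
  irreducible_rep (alpha t k z psi).
Proof.
move=> hk hz hc hd; split => // W stW.
pose D h := diag_mx (\row_(i < k) psi (iter i t h)).
have stD h : (W *m D h <= W)%MS.
  by have := stW (0%:Z, h); rewrite alpha0 tr_diag_mx.
have stA : (W *m (cycmx C k)^T <= W)%MS.
  have := stW (1%:Z, 0); rewrite alpha1 //.
  have -> : (z *: cycmx C k)^T = z *: (cycmx C k)^T by apply/matrixP=> i j; rewrite !mxE.
  rewrite -scalemxAr => h1.
  have -> : W *m (cycmx C k)^T = z^-1 *: (z *: (W *m (cycmx C k)^T)).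
    by rewrite scalerA mulVf // scale1r.
  exact: scalemx_sub.
have coord : forall (m : nat) (v : 'rV[C]_k), (#|[set j : 'I_k | v 0%R j != 0%R]| <= m)%N ->
    (v <= W)%MS -> forall p, v 0 p != 0 -> (delta_mx (0 : 'I_1) p <= W)%MS.
  move=> m; elim: m => [|m IH] v hcard hv p hp.
    have : (0 < #|[set j : 'I_k | v 0%R j != 0%R]|)%N by apply/card_gt0P; exists p; rewrite inE.
    by rewrite leqNgt in hcard; rewrite (negbTE hcard).
  case: (boolP [exists q, (q != p) && (v 0 q != 0)]).
    case/existsP=> q /andP[qp vq].
    have pq : p != q by rewrite eq_sym.
    have [h hh] := hd p q pq.
    pose v' := v *m D h + (- psi (iter q t h)) *: v.
    have ev j : v' 0 j = v 0 j * (psi (iter j t h) - psi (iter q t h)).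
      rewrite /v' /D mul_mx_diag !mxE mulrBr mulNr [psi _ * v 0 j]mulrC; done.
    apply: (IH v'); last by rewrite ev mulf_neq0 // subr_eq0.
      rewrite -ltnS; apply: leq_trans hcard; apply: proper_card; apply/properP; split.
        by apply/subsetP=> j; rewrite !inE ev mulf_eq0 negb_or => /andP[].
      by exists q; rewrite !inE ?ev ?subrr ?mulr0 ?eqxx.
    apply: addmx_sub; last exact: scalemx_sub.
    exact: submx_trans (submxMr _ hv) (stD h).
  rewrite negb_exists => /forallP hq.
  have -> : delta_mx 0 p = (v 0 p)^-1 *: v.
    apply/matrixP=> i j; rewrite !mxE (ord1 i) eqxx /=.
    case: (eqVneq j p) => [->|jp]; first by rewrite mulVf.
    by have := hq j; rewrite jp /= negbK => /eqP ->; rewrite mulr0.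
  exact: scalemx_sub.
case: (eqVneq W 0) => [->|Wn0].
  by left; apply/andP; split; [rewrite submx0 | exact: sub0mx].
right.
have [i [j Wij]] : exists i j, W i j != 0.
  case: (boolP [exists i, exists j, W i j != 0]) => [/existsP[i /existsP[j ?]]|];
    first by exists i, j.
  rewrite negb_exists => /forallP hn; move: Wn0; suff -> : W = 0 by rewrite eqxx.
  apply/matrixP => a b; have := hn a; rewrite negb_exists => /forallP /(_ b).
  by rewrite negbK mxE => /eqP.
have ej : (delta_mx (0 : 'I_1) j <= W)%MS.
  apply: (coord #|'I_k| (row i W)); first exact: max_card.
    exact: row_sub.
  by rewrite mxE.
have shift (p : 'I_k) : delta_mx (0 : 'I_1) (ordS p) = delta_mx 0 p *m (cycmx C k)^T.
  apply/matrixP=> a b; rewrite mulmx_trcyc !mxE; congr (_ && _)%:R.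
  by apply/eqP/eqP => [->|<-]; rewrite ?ordSK ?ord_predK.
have eall m : (delta_mx (0 : 'I_1) (iter m (@ordS k) j) <= W)%MS.
  elim: m => [|m IH] //=; rewrite shift.
  exact: submx_trans (submxMr _ IH) stA.
rewrite -sub1mx; apply/row_subP => q; rewrite row1.
have -> : q = iter (q + k - j) (@ordS k) j.
  apply: val_inj; rewrite iter_ordS addnBA; last by apply: leq_trans (ltnW (ltn_ord j)) (leq_addl _ _).
  by rewrite addKn modnDr modn_small.
exact: eall.
Qed.
End Irr.


Lemma modg_aux (g k i j : nat) : (g %| k)%N -> (0 < k)%N ->
  (i %% g == j.+1 %% g)%N = ((i + k).-1 %% g == j %% g)%N.
Proof.
move=> gk k0.
rewrite -(eqn_modDr 1 ((i + k).-1)) addn1 prednK; last by rewrite addn_gt0 k0 orbT.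
by rewrite -modnDmr (eqP gk) addn0 addn1.
Qed.

Section Per.
Variable C : numClosedFieldType.
Variable H : zmodType.
Variable t : {additive H -> H}.

Lemma comm_tr k (W M : 'M[C]_k) : W^T = W -> comm_mx W M -> comm_mx W M^T.
Proof. by move=> Ws cWM; rewrite /comm_mx -{1}Ws -trmx_mul -cWM trmx_mul Ws. Qed.

Lemma comm_scale k (W M : 'M[C]_k) a : comm_mx W M -> comm_mx W (a *: M).
Proof. by move=> cWM; rewrite /comm_mx -scalemxAr cWM scalemxAl. Qed.

Lemma comm_pow k (W M : 'M[C]_k) m : comm_mx W M -> comm_mx W (M ^+ m).
Proof. by move=> cWM; elim: m => [|m IH]; rewrite ?expr0 ?exprS;
  [exact: comm_mx1 | exact: comm_mxM]. Qed.

Lemma irr_period k z (chi : H -> C) g : (0 < k)%N -> is_character chi ->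
  irreducible_rep (alpha t k z chi) -> (forall h, chi (iter g t h) = chi h) ->
  (0 < g)%N -> (g %| k)%N -> g = k.
Proof.
move=> k0 hc [_ irr] per g0 gk.
case: (ltngtP g k) => [glt|gk'|//]; last by move: (dvdn_leq k0 gk); rewrite leqNgt gk'.
exfalso.
pose W : 'M[C]_k := \matrix_(i, j) ((i %% g)%N == (j %% g)%N)%:R.
have Ws : W^T = W by apply/matrixP=> i j; rewrite !mxE eq_sym.
have cA : comm_mx W (cycmx C k).
  apply/matrixP=> i j; rewrite mulmx_cyc cyc_mulmx !mxE /= !(modn_dvdm _ gk).
  by rewrite (modg_aux _ _ gk k0).
have cAT : comm_mx W (cycmx C k)^T by apply: comm_tr.
have cD h : comm_mx W (diag_mx (\row_(i < k) chi (iter i t h))).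
  apply/matrixP=> i j; rewrite mul_mx_diag mul_diag_mx !mxE.
  case: eqP => [e|_]; last by rewrite mulr0 mul0r.
  by rewrite mulr1 mul1r (per_mod per j) -e -(per_mod per).
have cal x : comm_mx W (alpha t k z chi x).
  apply: comm_scale; apply: comm_mxM => //.
  by case: x.1 => m /=; apply: comm_pow.
have := irr W (fun x => comm_mx_stable (comm_tr Ws (cal x))).
have i0 : (0 < k)%N := k0.
pose o := Ordinal i0; pose og := Ordinal glt.
case=> [/andP[W0 _]|rf].
  move: W0; rewrite submx0 => /eqP/matrixP/(_ o o).
  by rewrite !mxE eqxx => /eqP; rewrite oner_eq0.
pose v : 'cV[C]_k := delta_mx o 0 - delta_mx og 0.
have Wv : W *m v = 0.
  apply/matrixP=> i j; rewrite mulmxBr -!colE !mxE mod0n modnn subrr.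
  by [].
have : v = 0.
  by rewrite -(mulKmx (_ : W \in unitmx) v) ?Wv ?mulmx0 // -row_full_unit.
move/matrixP/(_ o 0); rewrite !mxE eqxx /=.
have -> : (o == og) = false by rewrite -val_eqE /= eq_sym; apply/negbTE; rewrite -lt0n.
by rewrite subr0 => /eqP; rewrite oner_eq0.
Qed.

End Per.


Section Orb.
Variable C : numClosedFieldType.
Variable H : zmodType.
Variable t : {additive H -> H}.

Lemma irr_dvd k z (chi : H -> C) d : (0 < k)%N -> is_character chi ->
  factors_through t k chi -> irreducible_rep (alpha t k z chi) ->
  (forall h, chi (iter d t h) = chi h) -> (k %| d)%N.
Proof.
move=> k0 hc hf hirr pd.
have pk := per_iter hc hf.
case: (egcdnP d k0) => km kn e _.
have pg h : chi (iter (gcdn k d) t h) = chi h.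
  by rewrite -(per_mul pd kn (iter (gcdn k d) t h)) -iterD -e (per_mul pk).
have g0 : (0 < gcdn k d)%N by rewrite gcdn_gt0 k0.
have eg := irr_period k0 hc hirr pg g0 (dvdn_gcdl k d).
by rewrite -eg dvdn_gcdr.
Qed.

Lemma iter_comm d k h : iter d t (iter k t h) = iter k t (iter d t h).
Proof. by rewrite -!iterD addnC. Qed.

Lemma orbit_core (k1 k2 : nat) (chi1 chi2 : H -> C) (t_bij : bijective t) :
  (0 < k1)%N -> (0 < k2)%N -> coprime k1 k2 ->
  is_character chi1 -> is_character chi2 ->
  (forall h, chi1 (iter k1 t h) = chi1 h) -> (forall h, chi2 (iter k2 t h) = chi2 h) ->
  (forall d, (forall h, chi1 (iter d t h) = chi1 h) -> (k1 %| d)%N) ->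
  (forall d, (forall h, chi2 (iter d t h) = chi2 h) -> (k2 %| d)%N) ->
  forall p q : nat, (p < q)%N -> (q < k1 * k2)%N ->
  (forall h, chi1 (iter p t h) * chi2 (iter p t h) = chi1 (iter q t h) * chi2 (iter q t h)) ->
  False.
Proof.
move=> hk1 hk2 hcop hc1 hc2 per1 per2 dv1 dv2 p q pq qK hpq.
have [tinv tK Kt] := t_bij.
have surj h : iter p t (iter p tinv h) = h.
  by elim: p {pq hpq} => // p IH; rewrite iterSr iterS Kt.
pose d := (q - p)%N.
have d0 : (0 < d)%N by rewrite subn_gt0.
have E h : chi1 (iter d t h) * chi2 (iter d t h) = chi1 h * chi2 h.
  rewrite -(surj h) -!iterD /d subnK; [by rewrite hpq | exact: ltnW].
have n1 x : chi1 x != 0 := char_neq0 x hc1.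
have n2 x : chi2 x != 0 := char_neq0 x hc2.
pose c h := chi1 (iter d t h) / chi1 h.
have c1 h : chi1 (iter d t h) = c h * chi1 h by rewrite divfK.
have c2 h : chi2 (iter d t h) * c h = chi2 h.
  by rewrite /c mulrA [chi2 _ * _]mulrC E [chi1 h * _]mulrC mulfK.
have cc2 h : c h = chi2 h / chi2 (iter d t h) by rewrite -(c2 h) [_ * c h]mulrC mulfK.
have ck1 h : c (iter k1 t h) = c h by rewrite /c iter_comm !per1.
have ck2 h : c (iter k2 t h) = c h by rewrite !cc2 iter_comm !per2.
case: (egcdnP k2 hk1) => km kn e _.
move: e; rewrite (eqP hcop) => e.
have ct h : c (t h) = c h.
  rewrite -(per_mul ck2 kn (t h)).
  have -> : iter (kn * k2) t (t h) = iter (kn * k2 + 1) t h by rewrite iterD.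
  by rewrite -e per_mul.
have cj j h : c (iter j t h) = c h by elim: j => //= j IH; rewrite ct.
have m1 m h : chi1 (iter (m * d) t h) = c h ^+ m * chi1 h.
  elim: m => [|m IH]; first by rewrite mul0n expr0 mul1r.
  by rewrite mulSn iterD c1 cj IH exprS mulrA.
have m2 m h : chi2 (iter (m * d) t h) * c h ^+ m = chi2 h.
  elim: m => [|m IH]; first by rewrite mul0n expr0 mulr1.
  by rewrite mulSn iterD exprS mulrA -{1}(cj (m * d)%N h) c2 IH.
have cone h : c h = 1.
  have e1 : c h ^+ k1 = 1.
    apply: (mulIf (n1 h)); rewrite -m1 mul1r mulnC.
    exact: (per_mul per1).
  have e2 : c h ^+ k2 = 1.
    apply: (mulfI (n2 h)); have := m2 k2 h; rewrite mulnC (per_mul per2) => ->.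
    by rewrite mulr1.
  have : c h ^+ (km * k1) = c h ^+ (kn * k2 + 1) by rewrite e.
  by rewrite exprD expr1 (mulnC km) (mulnC kn) !exprM e1 e2 !expr1n mul1r => ->.
have p1 h : chi1 (iter d t h) = chi1 h by rewrite c1 cone mul1r.
have p2 h : chi2 (iter d t h) = chi2 h by rewrite -[RHS](c2 h) cone mulr1.
have : (k1 * k2 %| d)%N by rewrite Gauss_dvd // dv1 // dv2.
move/(dvdn_leq d0); rewrite leqNgt => /negP; apply.
exact: leq_ltn_trans (leq_subr p q) qK.
Qed.

End Orb.


Section Conj.
Variable C : numClosedFieldType.
Variables (k1 k2 : nat) (hk1 : (0 < k1)%N) (hk2 : (0 < k2)%N) (hcop : coprime k1 k2).

Definition s1 (j : 'I_(k1 * k2)) : 'I_k1 := Ordinal (ltn_pmod j hk1).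
Definition s2 (j : 'I_(k1 * k2)) : 'I_k2 := Ordinal (ltn_pmod j hk2).
Definition sig (j : 'I_(k1 * k2)) : 'I_(k1 * k2) := mxtens_index (s1 j, s2 j).
Definition Umx : 'M[C]_(k1 * k2) := \matrix_(j, p) (sig j == p)%:R.

Lemma s12_eq i j : ((s1 i == s1 j) && (s2 i == s2 j)) = (i == j).
Proof.
rewrite -!val_eqE /= -chinese_remainder //.
by rewrite !modn_small.
Qed.

Lemma sig_inj : injective sig.
Proof.
move=> i j /(can_inj (@mxtens_indexK _ _)) /eqP.
by rewrite xpair_eqE s12_eq => /eqP.
Qed.

Lemma U_mull m (X : 'M[C]_(k1 * k2, m)) i j : (Umx *m X) i j = X (sig i) j.
Proof.
rewrite mxE (bigD1 (sig i)) //= mxE eqxx mul1r big1 ?addr0 // => l l0.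
by rewrite mxE eq_sym (negbTE l0) mul0r.
Qed.

Lemma U_mulr m (X : 'M[C]_(m, k1 * k2)) i j : (X *m Umx^T) i j = X i (sig j).
Proof.
rewrite mxE (bigD1 (sig j)) //= !mxE eqxx mulr1 big1 ?addr0 // => l l0.
by rewrite !mxE eq_sym (negbTE l0) mulr0.
Qed.

Lemma UUT : Umx *m Umx^T = 1%:M.
Proof.
apply/matrixP=> i j; rewrite U_mulr !mxE (inj_eq sig_inj).
by case: (i == j).
Qed.

Lemma UTU : Umx^T *m Umx = 1%:M.
Proof. exact: mulmx1C UUT. Qed.

Lemma adjU : adjmx Umx = Umx^T.
Proof. by apply/matrixP=> i j; rewrite !mxE rmorph_nat. Qed.

Local Notation Phi X Y := (Umx *m (X *t Y) *m Umx^T).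

Lemma PhiE (X : 'M[C]_k1) (Y : 'M[C]_k2) i j :
  (Phi X Y) i j = X (s1 i) (s1 j) * Y (s2 i) (s2 j).
Proof. by rewrite U_mulr U_mull tensmxE. Qed.

Lemma PhiM (X1 X2 : 'M[C]_k1) (Y1 Y2 : 'M[C]_k2) :
  Phi (X1 *m X2) (Y1 *m Y2) = Phi X1 Y1 *m Phi X2 Y2.
Proof.
by rewrite -tensmx_mul -!mulmxA (mulmxA Umx^T Umx) UTU mul1mx.
Qed.

Lemma Phi1 : Phi (1%:M : 'M[C]_k1) (1%:M : 'M[C]_k2) = 1%:M.
Proof.
apply/matrixP=> i j; rewrite PhiE !mxE -natrM.
by rewrite mulnb s12_eq.
Qed.

Lemma PhiX (X : 'M[C]_k1) (Y : 'M[C]_k2) m : Phi (X ^+ m) (Y ^+ m) = (Phi X Y) ^+ m.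
Proof.
elim: m => [|m IH]; first by rewrite !expr0 Phi1.
by rewrite !exprS -!mulmxE PhiM IH.
Qed.

Lemma PhiT (X : 'M[C]_k1) (Y : 'M[C]_k2) : Phi X^T Y^T = (Phi X Y)^T.
Proof. by apply/matrixP=> i j; rewrite PhiE [RHS]mxE PhiE !mxE. Qed.

Lemma PhiA : Phi (cycmx C k1) (cycmx C k2) = cycmx C (k1 * k2).
Proof.
apply/matrixP=> i j; rewrite PhiE !mxE -natrM mulnb /=.
congr ((nat_of_bool _)%:R).
rewrite -[in RHS](modn_small (ltn_ord i)) chinese_remainder //.
by rewrite -!(addn1 (_ %% _)) !modnDml !addn1.
Qed.

Lemma PhiD (d1 : 'rV[C]_k1) (d2 : 'rV[C]_k2) :
  Phi (diag_mx d1) (diag_mx d2) = diag_mx (\row_j (d1 0 (s1 j) * d2 0 (s2 j))).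
Proof.
apply/matrixP=> i j; rewrite PhiE !mxE mulrnAl mulrnAr -mulrnA.
by rewrite mulnC mulnb s12_eq.
Qed.

End Conj.


Section G.
Variable C : numClosedFieldType.

Lemma irr_conj (G : Type) n (rho sigma : G -> 'M[C]_n) :
  conjugate_reps rho sigma -> irreducible_rep sigma -> irreducible_rep rho.
Proof.
case=> U [uU cU] [n0 irr]; split => // W stW.
have UtU : adjmx U *m U = 1%:M := mulmx1C uU.
have fullT : row_full U^T.
  by rewrite row_full_unit unitmx_tr; case: (mulmx1_unit uU).
have st' x : stablemx (W *m U^T) (sigma x)^T.
  rewrite -cU !trmx_mul !mulmxA -(mulmxA W) -trmx_mul UtU trmx1 mulmx1.
  exact: submxMr (stW x).
case: (irr _ st') => [h0|hf]; [left|right].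
  apply/eqmx0P; move/eqmx0P: h0 => h0.
  have -> : W = (W *m U^T) *m (adjmx U)^T by rewrite -mulmxA -trmx_mul UtU trmx1 mulmx1.
  by rewrite h0 mul0mx.
by move: hf; rewrite !row_full_unit unitmx_mul => /andP[].
Qed.

Lemma tensZ m n p q (a b : C) (X : 'M[C]_(m, n)) (Y : 'M[C]_(p, q)) :
  (a *: X) *t (b *: Y) = (a * b) *: (X *t Y).
Proof. by apply/matrixP=> i j; rewrite !mxE mulrACA. Qed.

Variable H : zmodType.
Variable t : {additive H -> H}.

Lemma conj_main k1 k2 (hk1 : (0 < k1)%N) (hk2 : (0 < k2)%N) (hcop : coprime k1 k2)
  (z1 z2 : C) (chi1 chi2 : H -> C) : z1 != 0 -> z2 != 0 ->
  is_character chi1 -> is_character chi2 ->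
  factors_through t k1 chi1 -> factors_through t k2 chi2 ->
  conjugate_reps (tens_rep (alpha t k1 z1 chi1) (alpha t k2 z2 chi2))
    (alpha t (k1 * k2) (z1 * z2) (fun h => chi1 h * chi2 h)).
Proof.
move=> nz1 nz2 hc1 hc2 hf1 hf2.
exists (Umx C hk1 hk2); split; first by rewrite /unitary_mx adjU (UUT C hk1 hk2 hcop).
case=> n h; rewrite adjU /tens_rep /alpha /=.
rewrite tensZ -scalemxAr -scalemxAl exprzMl ?unitfE //; congr (_ *: _).
rewrite (PhiM hk1 hk2 hcop) (PhiD hk1 hk2 hcop).
congr (_ *m _).
  by case: n => m /=; rewrite (PhiX hk1 hk2 hcop) ?(PhiT hk1 hk2) (PhiA C hk1 hk2 hcop).
congr diag_mx; apply/matrixP => a j; rewrite !mxE /=.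
by rewrite -(per_mod (per_iter hc1 hf1)) -(per_mod (per_iter hc2 hf2)).
Qed.

End G.

Unset Implicit Arguments.
Set Strict Implicit.

Theorem proposition4p7 (R : realType) (H : zmodType) (t : {additive H -> H})
  (t_bij : bijective t) (k1 k2 : nat) (hk1 : (0 < k1)%N) (hk2 : (0 < k2)%N)
  (hcop : coprime k1 k2) (z1 z2 : R[i]) (hz1 : in_S1 z1) (hz2 : in_S1 z2)
  (chi1 chi2 : H -> R[i])
  (hchi1 : is_character chi1) (hchi1k : factors_through t k1 chi1)
  (hchi2 : is_character chi2) (hchi2k : factors_through t k2 chi2) :
  conjugate_reps
    (tens_rep (alpha t k1 z1 chi1) (alpha t k2 z2 chi2))
    (alpha t (k1 * k2) (z1 * z2) (fun h => chi1 h * chi2 h))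
  /\ (irreducible_rep (alpha t k1 z1 chi1) -> irreducible_rep (alpha t k2 z2 chi2) ->
      irreducible_rep (tens_rep (alpha t k1 z1 chi1) (alpha t k2 z2 chi2))).
Proof.
have nz (z : R[i]) : in_S1 z -> z != 0 by move=> hz; rewrite -normr_eq0 hz oner_eq0.
have hconj := conj_main hk1 hk2 hcop (nz _ hz1) (nz _ hz2) hchi1 hchi2 hchi1k hchi2k.
split => // irr1 irr2.
apply: (irr_conj hconj).
have hK : (0 < k1 * k2)%N by rewrite muln_gt0 hk1.
apply: irr_crit => //; first by rewrite mulf_neq0 ?nz.
  case: hchi1 => n1 m1; case: hchi2 => n2 m2; split.
    by move=> h; rewrite /in_S1 normrM n1 n2 mulr1.
  by move=> h h'; rewrite m1 m2 mulrACA.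
move=> p q pq; apply: NNPP => hn.
have hall h : chi1 (iter p t h) * chi2 (iter p t h) = chi1 (iter q t h) * chi2 (iter q t h).
  by apply/eqP; apply/negPn/negP => hne; apply: hn; exists h.
have per1 := per_iter hchi1 hchi1k.
have per2 := per_iter hchi2 hchi2k.
have dv1 d (pd : forall h, chi1 (iter d t h) = chi1 h) : (k1 %| d)%N :=
  irr_dvd hk1 hchi1 hchi1k irr1 pd.
have dv2 d (pd : forall h, chi2 (iter d t h) = chi2 h) : (k2 %| d)%N :=
  irr_dvd hk2 hchi2 hchi2k irr2 pd.
case: (ltngtP p q) => [lt|gt|e].
- exact: (orbit_core t_bij hk1 hk2 hcop hchi1 hchi2 per1 per2 dv1 dv2 lt (ltn_ord q) hall).
- by apply: (orbit_core t_bij hk1 hk2 hcop hchi1 hchi2 per1 per2 dv1 dv2 gt (ltn_ord p)) => h; rewrite hall.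
- by move: pq; rewrite -val_eqE /= e eqxx.
Qed.
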